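(* For real $a$ and $t>0$, $$K_0(t)\,\operatorname{ber}(a\sqrt{t})=\int_0^{\infty}(1+y^2)^{-1/2}J_0\!\left(\frac14\frac{a^2}{1+y^2}\right)\cosh\!\left(\frac14\frac{a^2y}{1+y^2}\right)\cos(ty)\,dy .$$
   Context: $K_0$ is the Macdonald function and $J_0$ the Bessel function of order $0$. The Kelvin function $\operatorname{ber}(x)=\sum_{k\ge0}\frac{(-1)^k (x/2)^{4k}}{((2k)!)^2}$. *)

(* Defs.v *)
From Stdlib Require Import Reals Factorial.
From Coquelicot Require Import Coquelicot.
Open Scope R_scope.

Definition J0 (x : R) : R :=
  Series (fun k : nat => (-1) ^ k * (x / 2) ^ (2 * k) / (INR (fact k)) ^ 2).

Definition ber (x : R) : R :=
  Series (fun k : nat => (-1) ^ k * (x / 2) ^ (4 * k) / (INR (fact (2 * k))) ^ 2).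

Definition K0 (t : R) : R :=
  RInt_gen (fun u => exp (- t * cosh u)) (at_point 0) (Rbar_locally p_infty).

Definition rhs_integrand (a t y : R) : R :=
  / sqrt (1 + y ^ 2)
  * J0 (/ 4 * (a ^ 2 / (1 + y ^ 2)))
  * cosh (/ 4 * (a ^ 2 * y / (1 + y ^ 2)))
  * cos (t * y).

(* Main.v *)
Require Import Defs.
From Stdlib Require Import Reals Lra Lia Psatz.
From Coquelicot Require Import Coquelicot.
From Stdlib Require Import Factorial.
Open Scope R_scope.

Ltac toR := match goal with |- ?a = ?b => change (a = b :> R) end.


Definition acoef (i : nat) : R :=
  if Nat.even i then (-1) ^ (Nat.div2 i) / (2 ^ i * (INR (fact (Nat.div2 i))) ^ 2) else 0.

Lemma acoef_even j : acoef (2 * j) = (-1) ^ j / (2 ^ (2 * j) * (INR (fact j)) ^ 2).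
Proof.
  unfold acoef. rewrite Nat.even_mul. simpl Nat.even. simpl orb.
  rewrite Nat.div2_double. reflexivity.
Qed.

Lemma acoef_odd j : acoef (2 * j + 1) = 0.
Proof.
  unfold acoef. rewrite Nat.even_add, Nat.even_mul. simpl. reflexivity.
Qed.

Lemma fact_pos_R n : 0 < INR (fact n).
Proof. apply lt_0_INR, lt_O_fact. Qed.

Lemma acoef_rec i : (INR (i + 2)) ^ 2 * acoef (i + 2) = - acoef i.
Proof.
  destruct (Nat.Even_or_Odd i) as [[j ->]|[j ->]].
  - replace (2 * j + 2)%nat with (2 * S j)%nat by lia.
    rewrite !acoef_even.
    replace (INR (2 * S j)) with (2 * (INR j + 1)) by (rewrite mult_INR, !S_INR; simpl; ring).
    replace (fact (S j)) with (S j * fact j)%nat by reflexivity.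
    rewrite mult_INR, S_INR.
    replace (2 * S j)%nat with (S (S (2 * j))) by lia.
    simpl pow.
    pose proof (fact_pos_R j). pose proof (pow_lt 2 (2*j) ltac:(lra)).
    pose proof (pos_INR j). field. repeat split; first [apply pow_nonzero; lra | lra].
  - replace (2 * j + 1 + 2)%nat with (2 * S j + 1)%nat by lia.
    rewrite !acoef_odd. ring.
Qed.

Lemma acoef_abs i : Rabs (acoef i) * INR (fact i) <= 1.
Proof.
  destruct (Nat.Even_or_Odd i) as [[j ->]|[j ->]].
  - rewrite acoef_even.
    assert (H: INR (fact (2 * j)) <= 2 ^ (2 * j) * INR (fact j) ^ 2).
    { induction j.
      - simpl. lra.
      - replace (fact (2 * S j)) with ((S (S (2*j))) * (S (2 * j)) * fact (2 * j))%nat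
          by (replace (2 * S j)%nat with (S (S (2 * j))) by lia; simpl; lia).
        replace (fact (S j)) with (S j * fact j)%nat by reflexivity.
        replace (2 ^ (2 * S j)) with (4 * 2 ^ (2 * j))
          by (replace (2 * S j)%nat with (S (S (2 * j))) by lia; simpl; ring).
        rewrite !mult_INR, !S_INR, mult_INR.
        replace (INR 2) with 2 by (simpl; ring).
        pose proof (pos_INR j).
        assert (0 <= INR (fact (2*j))) by (left; apply fact_pos_R).
        assert (0 <= 2 ^ (2 * j) * INR (fact j) ^ 2).
        { apply Rmult_le_pos. apply pow_le; lra. apply pow2_ge_0. }
        apply Rle_trans with ((2 * INR j + 1 + 1) * (2 * INR j + 1) * (2 ^ (2 * j) * INR (fact j) ^ 2)).
        + apply Rmult_le_compat_l; auto. nra.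
        + replace (4 * 2 ^ (2 * j) * ((INR j + 1) * INR (fact j)) ^ 2)
            with (4 * (INR j + 1)^2 * (2 ^ (2 * j) * INR (fact j) ^ 2)) by ring.
          apply Rmult_le_compat_r; auto. nra. }
    pose proof (fact_pos_R j). pose proof (pow_lt 2 (2*j) ltac:(lra)).
    rewrite Rabs_div, pow_1_abs, Rabs_right.
    2:{ apply Rle_ge, Rmult_le_pos; [lra| apply pow2_ge_0]. }
    2:{ apply Rgt_not_eq. apply Rmult_gt_0_compat; [lra| apply pow_lt; lra]. }
    assert (HX: 0 < 2 ^ (2 * j) * INR (fact j) ^ 2).
    { apply Rmult_gt_0_compat; [lra| apply pow_lt; lra]. }
    apply (Rmult_le_reg_r (2 ^ (2 * j) * INR (fact j) ^ 2)); auto.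
    replace (1 / (2 ^ (2 * j) * INR (fact j) ^ 2) * INR (fact (2 * j)) * (2 ^ (2 * j) * INR (fact j) ^ 2))
      with (INR (fact (2 * j))) by (field; lra). lra.
  - rewrite acoef_odd, Rabs_R0. lra.
Qed.


Definition bcoef (y : R) (m : nat) : R := (-y) ^ m / INR (fact m).

Lemma b_shift y m : y * bcoef y m = - INR (S m) * bcoef y (S m).
Proof.
  unfold bcoef. replace (fact (S m)) with (S m * fact m)%nat by reflexivity.
  rewrite mult_INR. pose proof (fact_pos_R m). pose proof (pos_INR m).
  rewrite S_INR. simpl pow. field. lra.
Qed.

Definition Tn (y : R) (n : nat) : R := sum_f_R0 (fun i => acoef i * bcoef y (n - i)) n.

Lemma acoef0 : acoef 0 = 1.
Proof. unfold acoef. simpl. field. Qed.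
Lemma acoef1 : acoef 1 = 0.
Proof. reflexivity. Qed.

Lemma Tn_0 y : Tn y 0 = 1.
Proof. unfold Tn, bcoef. simpl. rewrite acoef0. field. Qed.

Lemma Tn_1 y : Tn y 1 = - y.
Proof.
  unfold Tn, bcoef. simpl. rewrite acoef0, acoef1. field.
Qed.

Lemma sum_ext_last (f : nat -> R) N : f (S N) = 0 -> sum_f_R0 f (S N) = sum_f_R0 f N.
Proof. intros H. rewrite tech5, H. ring. Qed.

Lemma sum_opp (f : nat -> R) N : - sum_f_R0 f N = sum_f_R0 (fun i => - f i) N.
Proof. induction N; simpl; [ring| rewrite <- IHN; ring]. Qed.

Lemma Tn_rec y n :
  (INR (S (S n))) ^ 2 * Tn y (S (S n)) + (2 * INR n + 3) * y * Tn y (S n)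
  + (1 + y ^ 2) * Tn y n = 0.
Proof.
  set (N := S (S n)).
  assert (L1 : y * Tn y (S n) =
     - sum_f_R0 (fun i => acoef i * INR (N - i) * bcoef y (N - i)) N).
  { unfold Tn. rewrite scal_sum.
    unfold N. rewrite (sum_ext_last (fun i => acoef i * INR (S (S n) - i) * bcoef y (S (S n) - i))).
    2:{ rewrite Nat.sub_diag. simpl. ring. }
    rewrite sum_opp. apply sum_eq. intros i Hi.
    replace (S (S n) - i)%nat with (S (S n - i)) by lia.
    rewrite (Rmult_assoc (acoef i)), (Rmult_comm _ y), b_shift. ring. }
  assert (L2 : y ^ 2 * Tn y n =
     sum_f_R0 (fun i => acoef i * (INR (N - i) * (INR (N - i) - 1)) * bcoef y (N - i)) N).
  { unfold N. rewrite (sum_ext_last (fun i => acoef i * (INR (S (S n) - i) * (INR (S (S n) - i) - 1)) * bcoef y (S (S n) - i))).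
    2:{ rewrite Nat.sub_diag. simpl. ring. }
    rewrite (sum_ext_last (fun i => acoef i * (INR (S (S n) - i) * (INR (S (S n) - i) - 1)) * bcoef y (S (S n) - i))).
    2:{ replace (S n - S n)%nat with 0%nat by lia. replace (S (S n) - S n)%nat with 1%nat by lia. simpl. ring. }
    unfold Tn. rewrite scal_sum. apply sum_eq. intros i Hi.
    replace (S (S n) - i)%nat with (S (S (n - i))) by lia.
    rewrite Rmult_assoc. replace (bcoef y (n - i) * y ^ 2) with (y * (y * bcoef y (n - i))) by ring.
    rewrite b_shift. replace (y * (- INR (S (n - i)) * bcoef y (S (n - i)))) with
       (- INR (S (n - i)) * (y * bcoef y (S (n - i)))) by ring.
    rewrite b_shift. rewrite !S_INR. ring. }
  assert (L3 : INR N ^ 2 * Tn y N = sum_f_R0 (fun i => acoef i * INR N ^ 2 * bcoef y (N - i)) N).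
  { unfold Tn. rewrite scal_sum. apply sum_eq. intros. ring. }
  assert (L4 : INR N ^ 2 * Tn y N + (2 * INR n + 3) * y * Tn y (S n) + y ^ 2 * Tn y n
        = sum_f_R0 (fun i => INR i ^ 2 * acoef i * bcoef y (N - i)) N).
  { rewrite Rmult_assoc, L1, L2, L3, sum_opp, scal_sum, <- !plus_sum.
    apply sum_eq. intros i Hi. rewrite minus_INR by exact Hi.
    unfold N. rewrite !S_INR. ring. }
  assert (L5 : sum_f_R0 (fun i => INR i ^ 2 * acoef i * bcoef y (N - i)) N = - Tn y n).
  { unfold N. rewrite decomp_sum by lia. simpl pred. rewrite decomp_sum by lia. simpl pred.
    replace (INR 0 ^ 2 * acoef 0 * bcoef y (S (S n) - 0)) with 0 by (simpl; ring).
    replace (INR 1 ^ 2 * acoef 1 * bcoef y (S (S n) - 1)) with 0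
      by (rewrite acoef1; ring).
    unfold Tn. rewrite <- (Rmult_1_l (sum_f_R0 (fun i => acoef i * bcoef y (n - i)) n)).
    rewrite Ropp_mult_distr_l, scal_sum.
    rewrite !Rplus_0_l. apply sum_eq. intros i Hi.
    replace (S (S n) - S (S i))%nat with (n - i)%nat by lia.
    pose proof (acoef_rec i) as Hr. replace (i + 2)%nat with (S (S i)) in Hr by lia.
    rewrite Hr. ring. }
  unfold N in *. lra.
Qed.

Definition Tprev (y : R) (n : nat) : R := match n with O => 0 | S m => Tn y m end.

Lemma Tn_rec' y n :
  (INR (S n)) ^ 2 * Tn y (S n) + (2 * INR n + 1) * y * Tn y n + (1 + y ^ 2) * Tprev y n = 0.
Proof.
  destruct n as [|n].
  - simpl Tprev. rewrite Tn_1, Tn_0. simpl. ring.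
  - simpl Tprev. pose proof (Tn_rec y n). rewrite !S_INR in *. lra.
Qed.

Lemma is_derive_sum (f : nat -> R -> R) (df : nat -> R) (y : R) N :
  (forall i, (i <= N)%nat -> is_derive (f i) y (df i)) ->
  is_derive (fun x => sum_f_R0 (fun i => f i x) N) y (sum_f_R0 df N).
Proof.
  induction N as [|N IH]; intros H.
  - simpl. apply H. lia.
  - simpl. apply (is_derive_plus (fun x => sum_f_R0 (fun i => f i x) N) (f (S N))).
    + apply IH. intros; apply H; lia.
    + apply H; lia.
Qed.

Lemma b_derive y m : is_derive (fun x => bcoef x (S m)) y (- bcoef y m).
Proof.
  unfold bcoef. replace (fact (S m)) with (S m * fact m)%nat by reflexivity.
  rewrite mult_INR. pose proof (fact_pos_R m). pose proof (pos_INR m).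
  rewrite S_INR. auto_derive; auto.
  assert (E: (match m with 0%nat => 1 | S _ => INR m + 1 end) = INR m + 1) by (destruct m; simpl; ring).
  rewrite E. field. lra.
Qed.

Lemma Tn_derive y n : is_derive (fun x => Tn x n) y (- Tprev y n).
Proof.
  destruct n as [|n].
  - simpl Tprev. unfold Tn. simpl. unfold bcoef. simpl.
    apply is_derive_ext with (fun _ => acoef 0 * (1 / 1)). { intros; simpl; ring. }
    replace (-0) with 0 by ring. auto_derive; try ring; auto.
  - simpl Tprev. unfold Tn.
    apply is_derive_ext with
      (fun x => sum_f_R0 (fun i => acoef i * bcoef x (S n - i)) n + acoef (S n) * bcoef x 0).
    { intros t. rewrite tech5. rewrite Nat.sub_diag. reflexivity. }
    replace (- sum_f_R0 (fun i => acoef i * bcoef y (n - i)) n) with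
      (sum_f_R0 (fun i => acoef i * (- bcoef y (n - i))) n + 0).
    2:{ rewrite <- (Rmult_1_l (sum_f_R0 (fun i => acoef i * bcoef y (n - i)) n)).
        rewrite Ropp_mult_distr_l, scal_sum. rewrite Rplus_0_r. apply sum_eq. intros. ring. }
    apply (is_derive_plus (fun x => sum_f_R0 (fun i => acoef i * bcoef x (S n - i)) n)
             (fun x => acoef (S n) * bcoef x 0)).
    + apply (is_derive_sum (fun i x => acoef i * bcoef x (S n - i))).
      intros i Hi. replace (S n - i)%nat with (S (n - i)) by lia.
      apply (is_derive_scal (fun x => bcoef x (S (n - i)))). apply b_derive.
    + unfold bcoef. simpl.
      apply is_derive_ext with (fun _ => acoef (S n) * (1 / 1)). { intros; simpl; ring. }
      auto_derive; try ring; auto.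
Qed.

Lemma Tn_at0 n : Tn 0 n = acoef n.
Proof.
  destruct n as [|n].
  - unfold Tn. simpl. unfold bcoef. simpl. field.
  - unfold Tn. rewrite tech5, Nat.sub_diag.
    rewrite (sum_eq _ (fun _ => 0)).
    + unfold bcoef. simpl. rewrite sum_cte. field.
    + intros i Hi. replace (S n - i)%nat with (S (n - i)) by lia. unfold bcoef.
      simpl. rewrite Ropp_0. unfold Rdiv. rewrite !Rmult_0_l, Rmult_0_r. reflexivity.
Qed.


Definition Gf (n : nat) (y : R) : R :=
  (INR (fact n)) ^ 2 * Tn y n / (sqrt (1 + y ^ 2) * (1 + y ^ 2) ^ n).

Lemma W_derive n y :
  is_derive (fun x => / (sqrt (1 + x ^ 2) * (1 + x ^ 2) ^ n)) y
    (- (2 * INR n + 1) * y / (sqrt (1 + y ^ 2) * (1 + y ^ 2) ^ (S n))).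
Proof.
  assert (Hu : 0 < 1 + y ^ 2) by (pose proof (pow2_ge_0 y); lra).
  pose proof (sqrt_lt_R0 _ Hu) as Hs.
  pose proof (sqrt_sqrt (1 + y^2) (Rlt_le _ _ Hu)) as Hss.
  destruct n as [|m].
  - auto_derive;
    simpl pow in *; change (y*(y*1)) with (y^2) in *; set (s := sqrt (1+y^2)) in *; set (u := 1 + y^2) in *;
    clearbody s u.
    + repeat split; auto; lra.
    + simpl INR. rewrite <- Hss. field. lra.
  - auto_derive;
    simpl pow in *; change (y*(y*1)) with (y^2) in *; set (s := sqrt (1+y^2)) in *; set (u := 1 + y^2) in *;
    clearbody s u.
    + assert (0 < u^m) by (apply pow_lt; lra).
      repeat split; auto. apply Rgt_not_eq. repeat apply Rmult_gt_0_compat; lra.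
    + simpl pred. rewrite S_INR.
      assert (0 < u^m) by (apply pow_lt; lra).
      assert (E: (match m with 0%nat => 1 | S _ => INR m + 1 end) = INR m + 1) by (destruct m; simpl; ring).
      rewrite E. subst u. field. split; lra.
Qed.

Lemma G_derive n y : is_derive (Gf n) y (Gf (S n) y).
Proof.
  assert (Hu : 0 < 1 + y ^ 2) by (pose proof (pow2_ge_0 y); lra).
  pose proof (sqrt_lt_R0 _ Hu) as Hs.
  assert (Hp : 0 < (1 + y^2)^n) by (apply pow_lt; lra).
  pose proof (Tn_rec' y n) as Hrec.
  apply is_derive_ext with
    (fun x => INR (fact n) ^ 2 * (Tn x n * (/ (sqrt (1 + x ^ 2) * (1 + x ^ 2) ^ n)))).
  { intros x. unfold Gf.
    change (INR (fact n) ^ 2 * (Tn x n * / (sqrt (1 + x ^ 2) * (1 + x ^ 2) ^ n)) =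
            INR (fact n) ^ 2 * Tn x n / (sqrt (1 + x ^ 2) * (1 + x ^ 2) ^ n)).
    unfold Rdiv. ring. }
  replace (Gf (S n) y) with (INR (fact n) ^ 2 * (- Tprev y n * / (sqrt (1 + y ^ 2) * (1 + y ^ 2) ^ n)
     + Tn y n * (- (2 * INR n + 1) * y / (sqrt (1 + y ^ 2) * (1 + y ^ 2) ^ (S n))))).
  2:{ unfold Gf. replace (fact (S n)) with (S n * fact n)%nat by reflexivity.
      rewrite mult_INR.
      replace ((INR (S n) * INR (fact n)) ^ 2 * Tn y (S n))
        with (INR (fact n) ^ 2 * (INR (S n) ^ 2 * Tn y (S n))) by ring.
      replace (INR (S n) ^ 2 * Tn y (S n)) with
        (- ((2 * INR n + 1) * y * Tn y n + (1 + y ^ 2) * Tprev y n)) by lra.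
      rewrite <- (tech_pow_Rmult (1 + y^2) n). field. repeat split; lra. }
  apply (is_derive_scal (fun x => Tn x n * (/ (sqrt (1 + x ^ 2) * (1 + x ^ 2) ^ n)))).
  apply (is_derive_mult (fun x => Tn x n) (fun x => / (sqrt (1 + x ^ 2) * (1 + x ^ 2) ^ n))).
  - apply Tn_derive.
  - apply W_derive.
  - intros; apply Rmult_comm.
Qed.

Lemma G_cont n y : continuous (Gf n) y.
Proof. apply (ex_derive_continuous (Gf n)). exists (Gf (S n) y). apply G_derive. Qed.

Lemma G_odd0 k : Gf (2 * k + 1) 0 = 0.
Proof. unfold Gf. rewrite Tn_at0, acoef_odd. unfold Rdiv. ring. Qed.

Lemma sum_binom n : sum_f_R0 (fun i => Binomial.C n i) n = 2 ^ n.
Proof.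
  replace 2 with (1 + 1) by ring. rewrite binomial. apply sum_eq. intros. rewrite !pow1. ring.
Qed.

Lemma Tn_bound y n : INR (fact n) * Rabs (Tn y n) <= 2 ^ n * (1 + y ^ 2) ^ n.
Proof.
  assert (Hy : Rabs y <= 1 + y ^ 2).
  { destruct (Rle_dec 0 y). - rewrite Rabs_right by lra. nra. - rewrite Rabs_left by lra. nra. }
  assert (H1 : 1 <= 1 + y ^ 2) by (pose proof (pow2_ge_0 y); lra).
  unfold Tn. rewrite <- sum_binom, (Rmult_comm (sum_f_R0 (fun i => Binomial.C n i) n)), scal_sum.
  apply Rle_trans with (INR (fact n) * sum_f_R0 (fun i => Rabs (acoef i * bcoef y (n - i))) n).
  { apply Rmult_le_compat_l. left; apply fact_pos_R. apply Rsum_abs. }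
  rewrite scal_sum. apply sum_Rle. intros i Hi.
  unfold bcoef. rewrite Rabs_mult, Rabs_div, <- RPow_abs, Rabs_Ropp.
  2:{ apply Rgt_not_eq, fact_pos_R. }
  rewrite (Rabs_right (INR (fact (n - i)))) by (left; apply fact_pos_R).
  unfold Binomial.C.
  pose proof (acoef_abs i) as Ha.
  pose proof (fact_pos_R i). pose proof (fact_pos_R (n - i)). pose proof (fact_pos_R n).
  assert (Hp : Rabs y ^ (n - i) <= (1 + y ^ 2) ^ n).
  { apply Rle_trans with ((1 + y ^ 2) ^ (n - i)).
    - apply pow_incr. split; [apply Rabs_pos | exact Hy].
    - apply Rle_pow; [exact H1 | lia]. }
  assert (Hq : 0 <= Rabs y ^ (n - i)) by (apply pow_le, Rabs_pos).
  assert (Hr : 0 < (1 + y ^ 2) ^ n) by (apply pow_lt; lra).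
  replace (Rabs (acoef i) * (Rabs y ^ (n - i) / INR (fact (n - i))) * INR (fact n))
    with (INR (fact n) / (INR (fact i) * INR (fact (n - i))) * ((Rabs (acoef i) * INR (fact i)) * Rabs y ^ (n - i)))
    by (field; lra).
  apply Rmult_le_compat_l.
  { apply Rlt_le. apply Rdiv_lt_0_compat; [lra| apply Rmult_lt_0_compat; lra]. }
  apply Rle_trans with (1 * Rabs y ^ (n - i)).
  { apply Rmult_le_compat_r; auto. }
  lra.
Qed.

Lemma G_bound n y : Rabs (Gf n y) <= INR (fact n) * 2 ^ n / sqrt (1 + y ^ 2).
Proof.
  assert (Hu : 0 < 1 + y ^ 2) by (pose proof (pow2_ge_0 y); lra).
  pose proof (sqrt_lt_R0 _ Hu) as Hs.
  assert (Hp : 0 < (1 + y^2)^n) by (apply pow_lt; lra).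
  pose proof (Tn_bound y n) as HT. pose proof (fact_pos_R n).
  unfold Gf. rewrite Rabs_div. 2:{ apply Rgt_not_eq, Rmult_lt_0_compat; lra. }
  rewrite Rabs_mult, (Rabs_right (sqrt _ * _)) by (left; apply Rmult_lt_0_compat; lra).
  rewrite Rabs_right by (apply Rle_ge, pow_le; lra).
  apply (Rmult_le_reg_r (sqrt (1 + y ^ 2) * (1 + y ^ 2) ^ n)). { apply Rmult_lt_0_compat; lra. }
  replace (INR (fact n) ^ 2 * Rabs (Tn y n) / (sqrt (1 + y ^ 2) * (1 + y ^ 2) ^ n) *
    (sqrt (1 + y ^ 2) * (1 + y ^ 2) ^ n)) with (INR (fact n) * (INR (fact n) * Rabs (Tn y n))) by (field; lra).
  replace (INR (fact n) * 2 ^ n / sqrt (1 + y ^ 2) * (sqrt (1 + y ^ 2) * (1 + y ^ 2) ^ n))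
    with (INR (fact n) * (2 ^ n * (1 + y ^ 2) ^ n)) by (field; lra).
  apply Rmult_le_compat_l; lra.
Qed.



Lemma series_even (u : nat -> R) l :
  is_series u l -> (forall k, u (2 * k + 1)%nat = 0) -> is_series (fun k => u (2 * k)%nat) l.
Proof.
  intros H Hodd.
  assert (Hs' : forall K, sum_f_R0 (fun k => u (2 * k)%nat) K = sum_f_R0 u (2 * K + 1)).
  { intros K. induction K as [|K IH].
    - pose proof (Hodd 0%nat) as H0; simpl in H0. simpl. rewrite H0. ring.
    - replace (2 * S K + 1)%nat with (S (S (2 * K + 1))) by lia.
      rewrite !tech5, IH.
      replace (S (S (2 * K + 1))) with (2 * S K + 1)%nat by lia. rewrite Hodd.
      replace (S (2 * K + 1)) with (2 * S K)%nat by lia. ring. }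
  assert (Hs : forall K, sum_n (fun k => u (2 * k)%nat) K = sum_n u (2 * K + 1)).
  { intros K. rewrite !sum_n_Reals. apply Hs'. }
  unfold is_series in *.
  apply filterlim_ext with (fun K => sum_n u (2 * K + 1)). { intros; symmetry; auto. }
  apply (filterlim_comp _ _ _ (fun K => (2 * K + 1)%nat) (sum_n u) eventually eventually).
  - apply eventually_subseq. intros; lia.
  - exact H.
Qed.

Lemma exp_series x : is_series (fun n => x ^ n / INR (fact n)) (exp x).
Proof.
  pose proof (is_exp_Reals x) as H. unfold is_pseries in H.
  eapply is_series_ext. 2: exact H. intros n. simpl. rewrite pow_n_pow. unfold scal; simpl.
  unfold mult; simpl. unfold Rdiv. reflexivity.
Qed.

Lemma exp_ex_series x : ex_series (fun n => x ^ n / INR (fact n)).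
Proof. exists (exp x). apply exp_series. Qed.

Lemma zero_series : is_series (fun _ : nat => 0) 0.
Proof.
  pose proof (is_series_scal 0 _ _ (exp_series 0)) as H.
  unfold scal in H; simpl in H. unfold mult in H; simpl in H. rewrite Rmult_0_l in H.
  eapply is_series_ext. 2: exact H. intros; simpl. ring.
Qed.

Definition j0term (x : R) (k : nat) : R := (-1) ^ k * (x / 2) ^ (2 * k) / (INR (fact k)) ^ 2.

Lemma j0term_abs x k : Rabs (j0term x k) <= (x ^ 2 / 4) ^ k / INR (fact k).
Proof.
  unfold j0term. pose proof (fact_pos_R k).
  assert (E : (x / 2) ^ (2 * k) = (x ^ 2 / 4) ^ k).
  { rewrite pow_mult. f_equal. field. }
  rewrite E. assert (0 <= (x ^ 2 / 4) ^ k) by (apply pow_le; pose proof (pow2_ge_0 x); lra).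
  rewrite Rabs_div, Rabs_mult, pow_1_abs, Rabs_right, Rabs_right.
  2: apply Rle_ge, pow_le; lra. 2: lra. 2: apply Rgt_not_eq, pow_lt; lra.
  unfold Rdiv. rewrite Rmult_1_l. apply Rmult_le_compat_l; auto.
  apply Rinv_le_contravar; auto.
  assert (1 <= INR (fact k)). { apply (le_INR 1). apply lt_O_fact. }
  simpl. nra.
Qed.

Lemma J0_series x : is_series (j0term x) (J0 x).
Proof.
  unfold J0. fold (j0term x). apply Series_correct.
  apply ex_series_Rabs. apply (@ex_series_le R_AbsRing R_CompleteNormedModule _ (fun k => (x ^ 2 / 4) ^ k / INR (fact k))).
  - intros n. unfold norm; simpl. unfold abs; simpl. rewrite Rabs_Rabsolu. apply j0term_abs.
  - apply exp_ex_series.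
Qed.

Lemma acoef_series x : is_series (fun i => acoef i * x ^ i) (J0 x).
Proof.
  assert (H : is_pseries acoef x (J0 x + x * 0)).
  { apply is_pseries_odd_even.
    - unfold is_pseries. eapply is_series_ext. 2: apply J0_series.
      intros n. rewrite pow_n_pow.
      change (j0term x n = (x ^ 2) ^ n * acoef (2 * n)).
      rewrite acoef_even. unfold j0term. rewrite !pow_mult.
      replace ((x / 2) ^ 2) with (x ^ 2 / 2 ^ 2) by field. unfold Rdiv.
      rewrite Rpow_mult_distr, pow_inv. pose proof (fact_pos_R n).
      field. split; [lra|]. apply pow_nonzero. lra.
    - unfold is_pseries. eapply is_series_ext. 2: apply zero_series.
      + intros n. change (0 = pow_n (x ^ 2) n * acoef (2 * n + 1)). rewrite acoef_odd. ring. }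
  rewrite Rmult_0_r, Rplus_0_r in H. unfold is_pseries in H.
  eapply is_series_ext. 2: exact H. intros n. rewrite pow_n_pow.
  change (x ^ n * acoef n = acoef n * x ^ n). ring.
Qed.

Lemma Tn_series x y : is_series (fun n => Tn y n * x ^ n) (J0 x * exp (- (x * y))).
Proof.
  set (A := fun i => acoef i * x ^ i). set (B := fun m => bcoef y m * x ^ m).
  assert (HA : is_series A (J0 x)) by apply acoef_series.
  assert (HB : is_series B (exp (- (x * y)))).
  { eapply is_series_ext. 2: apply exp_series. intros n. unfold B, bcoef.
    toR. replace (- (x * y)) with (- y * x) by ring. rewrite Rpow_mult_distr.
    pose proof (fact_pos_R n). field. lra. }
  assert (HAa : ex_series (fun i => Rabs (A i))).
  { apply (@ex_series_le R_AbsRing R_CompleteNormedModule _ (fun n => Rabs x ^ n / INR (fact n))).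
    2: apply exp_ex_series.
    intros n. unfold norm; simpl. unfold abs; simpl. rewrite Rabs_Rabsolu. unfold A.
    rewrite Rabs_mult, <- RPow_abs. pose proof (acoef_abs n). pose proof (fact_pos_R n).
    assert (0 <= Rabs x ^ n) by (apply pow_le, Rabs_pos).
    apply (Rmult_le_reg_r (INR (fact n))); auto.
    replace (Rabs x ^ n / INR (fact n) * INR (fact n)) with (Rabs x ^ n) by (field; lra).
    replace (Rabs (acoef n) * Rabs x ^ n * INR (fact n)) with ((Rabs (acoef n) * INR (fact n)) * Rabs x ^ n) by ring.
    nra. }
  assert (HBa : ex_series (fun i => Rabs (B i))).
  { apply (@ex_series_le R_AbsRing R_CompleteNormedModule _ (fun n => Rabs (x * y) ^ n / INR (fact n))).
    2: apply exp_ex_series.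
    intros n. unfold norm; simpl. unfold abs; simpl. rewrite Rabs_Rabsolu. unfold B, bcoef.
    pose proof (fact_pos_R n).
    rewrite Rabs_mult, Rabs_div. 2: lra.
    rewrite <- !RPow_abs, Rabs_Ropp, (Rabs_right (INR (fact n))) by lra.
    rewrite Rabs_mult, Rpow_mult_distr. right. field. lra. }
  pose proof (is_series_mult A B _ _ HA HB HAa HBa) as HM.
  eapply is_series_ext. 2: exact HM. intros n. simpl.
  unfold Tn. rewrite (Rmult_comm _ (x ^ n)), scal_sum. apply sum_eq. intros i Hi.
  unfold A, B. replace (x ^ n) with (x ^ i * x ^ (n - i)).
  - ring.
  - rewrite <- pow_add. f_equal. lia.
Qed.

Lemma J0_even x : J0 (- x) = J0 x.
Proof.
  unfold J0. apply Series_ext. intros n. rewrite !pow_mult.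
  replace ((- x / 2) ^ 2) with ((x / 2) ^ 2) by field. reflexivity.
Qed.

Lemma F_even x y : is_series (fun k => Tn y (2 * k) * x ^ (2 * k)) (J0 x * cosh (x * y)).
Proof.
  pose proof (Tn_series x y) as H1. pose proof (Tn_series (- x) y) as H2.
  rewrite J0_even in H2.
  pose proof (is_series_scal (/ 2) _ _ (is_series_plus _ _ _ _ H1 H2)) as H.
  assert (E : forall n, scal (/ 2) (plus (Tn y n * x ^ n) (Tn y n * (- x) ^ n))
              = / 2 * (Tn y n * x ^ n + Tn y n * (- x) ^ n)) by reflexivity.
  apply (is_series_ext _ _ _ E) in H.
  apply series_even in H.
  - eapply is_series_ext. 2: { replace (J0 x * cosh (x * y)) with
          (scal (/ 2) (plus (J0 x * exp (- (x * y))) (J0 x * exp (- (- x * y))))). exact H.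
      unfold cosh. change (/ 2 * (J0 x * exp (- (x * y)) + J0 x * exp (- (- x * y))) =
         J0 x * ((exp (x * y) + exp (- (x * y))) / 2)).
      replace (- (- x * y)) with (x * y) by ring. field. }
    intros k. toR. replace (- x) with (-1 * x) by ring. rewrite Rpow_mult_distr, pow_1_even. field.
  - intros k. replace (- x) with (-1 * x) by ring. rewrite Rpow_mult_distr.
    replace (2 * k + 1)%nat with (S (2 * k)) by lia. rewrite pow_1_odd. ring.
Qed.

Definition zz (a : R) : R := a ^ 2 / 4.
Definition cc (a : R) (k : nat) : R := (zz a) ^ (2 * k) / (INR (fact (2 * k))) ^ 2.

Lemma F_series a y :
  is_series (fun k => cc a k * Gf (2 * k) y)
    (/ sqrt (1 + y ^ 2) * J0 (/ 4 * (a ^ 2 / (1 + y ^ 2))) * cosh (/ 4 * (a ^ 2 * y / (1 + y ^ 2)))).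
Proof.
  assert (Hu : 0 < 1 + y ^ 2) by (pose proof (pow2_ge_0 y); lra).
  pose proof (sqrt_lt_R0 _ Hu) as Hs.
  set (w := zz a / (1 + y ^ 2)).
  replace (/ 4 * (a ^ 2 / (1 + y ^ 2))) with w by (unfold w, zz; field; lra).
  replace (/ 4 * (a ^ 2 * y / (1 + y ^ 2))) with (w * y) by (unfold w, zz; field; lra).
  pose proof (is_series_scal (/ sqrt (1 + y ^ 2)) _ _ (F_even w y)) as H.
  eapply is_series_ext. 2: { replace (/ sqrt (1 + y ^ 2) * J0 w * cosh (w * y)) with
     (scal (/ sqrt (1 + y ^ 2)) (J0 w * cosh (w * y))). exact H.
     change (/ sqrt (1 + y ^ 2) * (J0 w * cosh (w * y)) = / sqrt (1 + y ^ 2) * J0 w * cosh (w * y)).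
     ring. }
  intros k. change (/ sqrt (1 + y ^ 2) * (Tn y (2 * k) * w ^ (2 * k)) = cc a k * Gf (2 * k) y).
  unfold cc, Gf, w. unfold Rdiv. rewrite Rpow_mult_distr, pow_inv.
  pose proof (fact_pos_R (2 * k)). assert (0 < (1 + y^2) ^ (2 * k)) by (apply pow_lt; lra).
  field. repeat split; lra.
Qed.



Lemma cos_cont t y : continuous (fun x => cos (t * x)) y.
Proof. apply (ex_derive_continuous (fun x => cos (t * x))). auto_derive. auto. Qed.

Lemma Gcos_cont n t y : continuous (fun x => Gf n x * cos (t * x)) y.
Proof.
  apply (continuous_mult (fun x => Gf n x) (fun x => cos (t * x))).
  apply G_cont. apply cos_cont.
Qed.

Lemma Gcos_ex n t a b : ex_RInt (fun x => Gf n x * cos (t * x)) a b.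
Proof. apply (@ex_RInt_continuous R_CompleteNormedModule). intros; apply Gcos_cont. Qed.

Definition Ak (t : R) (k : nat) (Y : R) : R := RInt (fun y => Gf (2 * k) y * cos (t * y)) 0 Y.
Definition Hn (t : R) (n : nat) (Y : R) : R := Gf (S n) Y * cos (t * Y) + t * Gf n Y * sin (t * Y).

Lemma Hn_derive t n x :
  is_derive (Hn t n) x (Gf (S (S n)) x * cos (t * x) + t ^ 2 * (Gf n x * cos (t * x))).
Proof.
  unfold Hn. auto_derive.
  - repeat split; eexists; apply G_derive.
  - rewrite !(is_derive_unique _ _ _ (G_derive _ _)). simpl. ring.
Qed.

Lemma A_rec t k Y : Ak t (S k) Y = - t ^ 2 * Ak t k Y + Hn t (2 * k) Y.
Proof.
  assert (I : is_RInt (fun x => Gf (S (S (2 * k))) x * cos (t * x) + t ^ 2 * (Gf (2 * k) x * cos (t * x)))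
                0 Y (minus (Hn t (2 * k) Y) (Hn t (2 * k) 0))).
  { apply (@is_RInt_derive R_CompleteNormedModule (Hn t (2 * k))).
    - intros; apply Hn_derive.
    - intros x _. apply (continuous_plus (fun x => Gf (S (S (2 * k))) x * cos (t * x))
        (fun x => t ^ 2 * (Gf (2 * k) x * cos (t * x)))).
      + apply Gcos_cont.
      + apply (continuous_mult (fun _ => t ^ 2) (fun x => Gf (2 * k) x * cos (t * x))).
        apply continuous_const. apply Gcos_cont. }
  assert (H0 : Hn t (2 * k) 0 = 0).
  { unfold Hn. replace (S (2 * k)) with (2 * k + 1)%nat by lia. rewrite G_odd0.
    rewrite Rmult_0_r, sin_0. ring. }
  rewrite H0 in I.
  pose proof (RInt_correct _ _ _ (Gcos_ex (S (S (2 * k))) t 0 Y)) as I1.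
  pose proof (RInt_correct _ _ _ (Gcos_ex (2 * k) t 0 Y)) as I2.
  pose proof (is_RInt_plus _ _ _ _ _ _ I1 (is_RInt_scal _ _ _ (t ^ 2) _ I2)) as I3.
  pose proof (is_RInt_unique _ _ _ _ I) as U1.
  pose proof (is_RInt_unique _ _ _ _ I3) as U2.
  change (RInt (fun x => Gf (S (S (2 * k))) x * cos (t * x) + t ^ 2 * (Gf (2 * k) x * cos (t * x))) 0 Y
          = Hn t (2 * k) Y - 0) in U1.
  change (RInt (fun x => Gf (S (S (2 * k))) x * cos (t * x) + t ^ 2 * (Gf (2 * k) x * cos (t * x))) 0 Y
          = RInt (fun x => Gf (S (S (2 * k))) x * cos (t * x)) 0 Y
            + t ^ 2 * RInt (fun x => Gf (2 * k) x * cos (t * x)) 0 Y) in U2.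
  unfold Ak. replace (2 * S k)%nat with (S (S (2 * k))) by lia. lra.
Qed.

Lemma abs_cos x : Rabs (cos x) <= 1.
Proof. apply Rabs_le. pose proof (COS_bound x). lra. Qed.
Lemma abs_sin x : Rabs (sin x) <= 1.
Proof. apply Rabs_le. pose proof (SIN_bound x). lra. Qed.

Lemma Hn_bound t n Y : 0 <= t ->
  Rabs (Hn t n Y) <= (INR (fact (S n)) * 2 ^ (S n) + t * (INR (fact n) * 2 ^ n)) / sqrt (1 + Y ^ 2).
Proof.
  intros ht. unfold Hn.
  pose proof (G_bound (S n) Y). pose proof (G_bound n Y).
  pose proof (abs_cos (t * Y)). pose proof (abs_sin (t * Y)).
  eapply Rle_trans. apply Rabs_triang.
  rewrite !Rabs_mult, (Rabs_right t) by lra.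
  assert (0 <= Rabs (Gf (S n) Y)) by apply Rabs_pos.
  assert (0 <= Rabs (Gf n Y)) by apply Rabs_pos.
  assert (Rabs (Gf (S n) Y) * Rabs (cos (t * Y)) <= Rabs (Gf (S n) Y)).
  { rewrite <- (Rmult_1_r (Rabs (Gf (S n) Y))) at 2. apply Rmult_le_compat_l; auto. }
  assert (t * Rabs (Gf n Y) * Rabs (sin (t * Y)) <= t * Rabs (Gf n Y)).
  { rewrite <- (Rmult_1_r (t * Rabs (Gf n Y))) at 2. apply Rmult_le_compat_l; auto. nra. }
  unfold Rdiv in *. rewrite Rmult_plus_distr_r. nra.
Qed.

Lemma E_bound t k Y : 0 < t ->
  Rabs (Ak t k Y - (- t ^ 2) ^ k * Ak t 0 Y) <= INR (fact (2 * k)) * (2 * (1 + t)) ^ (2 * k) / sqrt (1 + Y ^ 2).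
Proof.
  intros ht.
  assert (Hu : 0 < 1 + Y ^ 2) by (pose proof (pow2_ge_0 Y); lra).
  pose proof (sqrt_lt_R0 _ Hu) as Hs. set (s := sqrt (1 + Y ^ 2)) in *.
  induction k as [|k IH].
  - simpl. rewrite Rmult_1_l, Rminus_eq_0, Rabs_R0. apply Rlt_le. apply Rdiv_lt_0_compat; lra.
  - rewrite A_rec.
    replace (- t ^ 2 * Ak t k Y + Hn t (2 * k) Y - (- t ^ 2) ^ S k * Ak t 0 Y)
      with (- t ^ 2 * (Ak t k Y - (- t ^ 2) ^ k * Ak t 0 Y) + Hn t (2 * k) Y) by (simpl; ring).
    eapply Rle_trans. apply Rabs_triang.
    rewrite Rabs_mult, Rabs_Ropp, (Rabs_right (t ^ 2)) by (apply Rle_ge, pow2_ge_0).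
    pose proof (Hn_bound t (2 * k) Y (Rlt_le _ _ ht)) as HB. fold s in HB.
    assert (E1 : t ^ 2 * Rabs (Ak t k Y - (- t ^ 2) ^ k * Ak t 0 Y) <=
                 t ^ 2 * (INR (fact (2 * k)) * (2 * (1 + t)) ^ (2 * k) / s)).
    { apply Rmult_le_compat_l; [apply pow2_ge_0 | exact IH]. }
    eapply Rle_trans. apply Rplus_le_compat; [exact E1 | exact HB].
    set (F := INR (fact (2 * k))). set (q := 2 ^ (2 * k)). set (r := (1 + t) ^ (2 * k)).
    assert (HF : 0 < F) by apply fact_pos_R.
    assert (Hq : 0 < q) by (apply pow_lt; lra).
    assert (Hr : 1 <= r) by (apply pow_R1_Rle; lra).
    replace (2 * S k)%nat with (S (S (2 * k))) by lia.
    replace (INR (fact (S (S (2 * k))))) with ((2 * INR k + 2) * (2 * INR k + 1) * F)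
      by (unfold F; rewrite !fact_simpl, !mult_INR, !S_INR, !mult_INR, !S_INR; simpl; ring).
    replace (INR (fact (S (2 * k)))) with ((2 * INR k + 1) * F)
      by (unfold F; rewrite !fact_simpl, !mult_INR, !S_INR, !mult_INR, !S_INR; simpl; ring).
    replace ((2 * (1 + t)) ^ S (S (2 * k))) with (4 * (1 + t) ^ 2 * (q * r))
      by (unfold q, r; rewrite <- Rpow_mult_distr; simpl; ring).
    replace ((2 * (1 + t)) ^ (2 * k)) with (q * r) by (unfold q, r; rewrite Rpow_mult_distr; ring).
    replace (2 ^ S (2 * k)) with (2 * q) by (unfold q; simpl; ring).
    fold q.
    apply Rle_trans with ((t ^ 2 * (F * (q * r)) + ((2 * INR k + 1) * F * (2 * q) + t * (F * q))) / s).
    { right. field. lra. }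
    unfold Rdiv. apply Rmult_le_compat_r. { left. apply Rinv_0_lt_compat. lra. }
    pose proof (pos_INR k) as Hk.
    assert (0 < F * q) by (apply Rmult_lt_0_compat; lra).
    assert (X : t ^ 2 * r + 2 * (2 * INR k + 1) + t <= (2 * INR k + 2) * (2 * INR k + 1) * 4 * (1 + t) ^ 2 * r).
    { set (c := (2 * INR k + 2) * (2 * INR k + 1)).
      assert (Hc1 : 2 * (2 * INR k + 1) <= c) by (unfold c; nra).
      assert (Hc2 : 1 <= c) by (unfold c; nra).
      assert (A1 : 2 * (2 * INR k + 1) <= c * 4 * r) by nra.
      assert (A2 : t <= c * 8 * t * r).
      { assert (1 <= c * r) by nra. nra. }
      assert (A3 : t ^ 2 * r <= c * 4 * t ^ 2 * r).
      { assert (0 <= t ^ 2 * r) by (apply Rmult_le_pos; [apply pow2_ge_0 | lra]). nra. }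
      replace (c * 4 * (1 + t) ^ 2 * r) with (c * 4 * r + c * 8 * t * r + c * 4 * t ^ 2 * r) by ring.
      lra. }
    replace (t ^ 2 * (F * (q * r)) + ((2 * INR k + 1) * F * (2 * q) + t * (F * q)))
      with ((F * q) * (t ^ 2 * r + 2 * (2 * INR k + 1) + t)) by ring.
    replace ((2 * INR k + 2) * (2 * INR k + 1) * F * (4 * (1 + t) ^ 2 * (q * r)))
      with ((F * q) * ((2 * INR k + 2) * (2 * INR k + 1) * 4 * (1 + t) ^ 2 * r)) by ring.
    apply Rmult_le_compat_l; lra.
Qed.



Lemma series_lim u l : is_series u l -> is_lim_seq (fun M => sum_f_R0 u M) l.
Proof. intros H. apply is_lim_seq_ext with (sum_n u). intros; apply sum_n_Reals. exact H. Qed.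

Lemma cosh_series x : is_series (fun k => x ^ (2 * k) / INR (fact (2 * k))) (cosh x).
Proof.
  pose proof (is_series_scal (/ 2) _ _ (is_series_plus _ _ _ _ (exp_series x) (exp_series (- x)))) as H.
  assert (E : forall n, scal (/ 2) (plus (x ^ n / INR (fact n)) ((- x) ^ n / INR (fact n)))
              = / 2 * (x ^ n / INR (fact n) + (- x) ^ n / INR (fact n))) by reflexivity.
  apply (is_series_ext _ _ _ E) in H.
  apply series_even in H.
  - eapply is_series_ext. 2: { replace (cosh x) with (scal (/ 2) (plus (exp x) (exp (- x)))). exact H.
      unfold cosh. change (/ 2 * (exp x + exp (- x)) = (exp x + exp (- x)) / 2). field. }
    intros k. toR. replace (- x) with (-1 * x) by ring. rewrite Rpow_mult_distr, pow_1_even.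
    pose proof (fact_pos_R (2 * k)). field. lra.
  - intros k. replace (- x) with (-1 * x) by ring. rewrite Rpow_mult_distr.
    replace (2 * k + 1)%nat with (S (2 * k)) by lia. rewrite pow_1_odd.
    pose proof (fact_pos_R (S (2 * k))). field. lra.
Qed.

Lemma cosh_partial x K : 0 <= x -> sum_f_R0 (fun k => x ^ (2 * k) / INR (fact (2 * k))) K <= cosh x.
Proof.
  intros hx. apply (is_lim_seq_incr_compare (fun M => sum_f_R0 (fun k => x ^ (2 * k) / INR (fact (2 * k))) M)).
  - apply series_lim, cosh_series.
  - intros n. rewrite tech5. pose proof (fact_pos_R (2 * S n)).
    assert (0 <= x ^ (2 * S n)) by (apply pow_le; lra).
    assert (0 <= x ^ (2 * S n) / INR (fact (2 * S n))) by (apply Rdiv_le_0_compat; lra). lra.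
Qed.

Lemma tail_bound (u v : nat -> R) lu lv K :
  is_series u lu -> is_series v lv -> (forall k, Rabs (u k) <= v k) ->
  Rabs (lu - sum_f_R0 u K) <= lv - sum_f_R0 v K.
Proof.
  intros Hu Hv Huv.
  assert (Hd : forall d, Rabs (sum_f_R0 u (K + d) - sum_f_R0 u K) <= sum_f_R0 v (K + d) - sum_f_R0 v K).
  { induction d.
    - rewrite Nat.add_0_r, !Rminus_eq_0, Rabs_R0. lra.
    - replace (K + S d)%nat with (S (K + d)) by lia. rewrite !tech5.
      replace (sum_f_R0 u (K + d) + u (S (K + d)) - sum_f_R0 u K)
        with ((sum_f_R0 u (K + d) - sum_f_R0 u K) + u (S (K + d))) by ring.
      eapply Rle_trans. apply Rabs_triang. pose proof (Huv (S (K + d))). lra. }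
  pose proof (is_lim_seq_abs _ _ (is_lim_seq_minus' _ _ _ _ (series_lim _ _ Hu) (is_lim_seq_const (sum_f_R0 u K)))) as L1.
  pose proof (is_lim_seq_minus' _ _ _ _ (series_lim _ _ Hv) (is_lim_seq_const (sum_f_R0 v K))) as L2.
  assert (R : Rbar_le (Rbar_abs (lu - sum_f_R0 u K)) (lv - sum_f_R0 v K)).
  { eapply is_lim_seq_le_loc. 2: exact L1. 2: exact L2.
    exists K. intros M HM. replace M with (K + (M - K))%nat by lia. apply Hd. }
  simpl in R. exact R.
Qed.

Lemma zz_nonneg a : 0 <= zz a.
Proof. unfold zz. pose proof (pow2_ge_0 a). lra. Qed.

Lemma ber_series a t : 0 <= t -> is_series (fun k => cc a k * (- t ^ 2) ^ k) (ber (a * sqrt t)).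
Proof.
  intros ht.
  assert (Eq : forall k, (-1) ^ k * (a * sqrt t / 2) ^ (4 * k) / (INR (fact (2 * k))) ^ 2 = cc a k * (- t ^ 2) ^ k).
  { intros k. unfold cc, zz.
    replace (4 * k)%nat with (2 * (2 * k))%nat by lia. rewrite !pow_mult.
    replace ((a * sqrt t / 2) ^ 2) with (a ^ 2 * (sqrt t ^ 2) / 4) by field.
    rewrite pow2_sqrt by exact ht.
    replace (- t ^ 2) with (-1 * t ^ 2) by ring. rewrite Rpow_mult_distr.
    replace ((a ^ 2 * t / 4) ^ 2) with ((a ^ 2 / 4) ^ 2 * t ^ 2) by field.
    rewrite Rpow_mult_distr. pose proof (fact_pos_R (2 * k)). field. lra. }
  unfold ber. eapply is_series_ext. { intros k. apply Eq. }
  apply Series_correct. eapply ex_series_ext. { intros k. symmetry. apply Eq. }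
  apply ex_series_Rabs.
  apply (@ex_series_le R_AbsRing R_CompleteNormedModule _ (fun k => (zz a * t) ^ (2 * k) / INR (fact (2 * k)))).
  2: { exists (cosh (zz a * t)). apply cosh_series. }
  intros k. change (Rabs (Rabs (cc a k * (- t ^ 2) ^ k)) <= (zz a * t) ^ (2 * k) / INR (fact (2 * k))).
  rewrite Rabs_Rabsolu. unfold cc.
  pose proof (fact_pos_R (2 * k)). pose proof (zz_nonneg a).
  assert (1 <= INR (fact (2 * k))) by (apply (le_INR 1), lt_O_fact).
  replace (zz a ^ (2 * k) / INR (fact (2 * k)) ^ 2 * (- t ^ 2) ^ k)
    with ((zz a * t) ^ (2 * k) / INR (fact (2 * k)) ^ 2 * (-1) ^ k).
  2:{ rewrite Rpow_mult_distr. replace (- t ^ 2) with (-1 * t ^ 2) by ring.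
      rewrite (Rpow_mult_distr (-1)), <- pow_mult. field. lra. }
  assert (0 <= (zz a * t) ^ (2 * k)) by (apply pow_le; apply Rmult_le_pos; lra).
  rewrite Rabs_mult, pow_1_abs, Rmult_1_r, Rabs_right.
  2: { apply Rle_ge, Rdiv_le_0_compat; [lra| apply pow_lt; lra]. }
  unfold Rdiv. apply Rmult_le_compat_l; [lra|].
  apply Rinv_le_contravar; [lra|]. replace (INR (fact (2*k)) ^ 2) with (INR (fact (2*k)) * INR (fact (2*k))) by ring. nra.
Qed.

Definition PS (a : R) (K : nat) (y : R) : R := sum_f_R0 (fun k => cc a k * Gf (2 * k) y) K.
Definition Fs (a y : R) : R :=
  / sqrt (1 + y ^ 2) * J0 (/ 4 * (a ^ 2 / (1 + y ^ 2))) * cosh (/ 4 * (a ^ 2 * y / (1 + y ^ 2))).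

Lemma rhs_eq a t y : rhs_integrand a t y = Fs a y * cos (t * y).
Proof. reflexivity. Qed.

Lemma PS_int a t Y K :
  is_RInt (fun y => PS a K y * cos (t * y)) 0 Y (sum_f_R0 (fun k => cc a k * Ak t k Y) K).
Proof.
  induction K as [|K IH].
  - pose proof (is_RInt_scal _ _ _ (cc a 0) _ (RInt_correct _ _ _ (Gcos_ex (2 * 0) t 0 Y))) as H.
    eapply is_RInt_ext. 2: exact H. intros x _. unfold PS. simpl. unfold scal; simpl. unfold mult; simpl. ring.
  - pose proof (is_RInt_scal _ _ _ (cc a (S K)) _ (RInt_correct _ _ _ (Gcos_ex (2 * S K) t 0 Y))) as H.
    pose proof (is_RInt_plus _ _ _ _ _ _ IH H) as H2.
    eapply is_RInt_ext. 2: exact H2. intros x _. unfold PS. toR. rewrite tech5. unfold scal, plus; simpl.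
    unfold mult; simpl. ring.
Qed.

Lemma sqrt_ge1 y : 1 <= sqrt (1 + y ^ 2).
Proof.
  rewrite <- sqrt_1 at 1. apply sqrt_le_1_alt. pose proof (pow2_ge_0 y). lra.
Qed.

Lemma PS_unif a y K :
  Rabs (Fs a y - PS a K y) <= cosh (2 * zz a) - sum_f_R0 (fun k => (2 * zz a) ^ (2 * k) / INR (fact (2 * k))) K.
Proof.
  apply tail_bound.
  - apply F_series.
  - apply cosh_series.
  - intros k. unfold cc. pose proof (G_bound (2 * k) y) as HG.
    pose proof (sqrt_ge1 y) as Hs. pose proof (fact_pos_R (2 * k)) as Hf. pose proof (zz_nonneg a).
    assert (0 <= zz a ^ (2 * k)) by (apply pow_le; lra).
    rewrite Rabs_mult, Rabs_div, Rabs_right, Rabs_right. 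
    2: apply Rle_ge, pow2_ge_0. 2: lra. 2: apply pow_nonzero; lra.
    apply Rle_trans with (zz a ^ (2 * k) / INR (fact (2 * k)) ^ 2 * (INR (fact (2 * k)) * 2 ^ (2 * k) / sqrt (1 + y ^ 2))).
    { apply Rmult_le_compat_l; auto. apply Rdiv_le_0_compat; auto. apply pow_lt; lra. }
    rewrite Rpow_mult_distr.
    assert (0 < 2 ^ (2 * k)) by (apply pow_lt; lra).
    apply Rle_trans with (zz a ^ (2 * k) / INR (fact (2 * k)) ^ 2 * (INR (fact (2 * k)) * 2 ^ (2 * k))).
    { apply Rmult_le_compat_l. apply Rdiv_le_0_compat; auto. apply pow_lt; lra.
      unfold Rdiv. rewrite <- (Rmult_1_r (INR (fact (2 * k)) * 2 ^ (2 * k))) at 2.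
      apply Rmult_le_compat_l. apply Rmult_le_pos; lra.
      apply (Rle_trans _ (/ 1)). apply Rinv_le_contravar; lra. rewrite Rinv_1; lra. }
    right. field. lra.
Qed.

Lemma finite_Y a t Y : 0 < t ->
  exists I, is_RInt (rhs_integrand a t) 0 Y I /\
    Rabs (I - ber (a * sqrt t) * Ak t 0 Y) <= cosh (zz a * (2 * (1 + t))) / sqrt (1 + Y ^ 2).
Proof.
  intros ht.
  set (tl := fun K => cosh (2 * zz a) - sum_f_R0 (fun k => (2 * zz a) ^ (2 * k) / INR (fact (2 * k))) K).
  assert (Htl : is_lim_seq tl 0).
  { replace 0 with (cosh (2 * zz a) - cosh (2 * zz a)) by ring.
    apply is_lim_seq_minus'. apply is_lim_seq_const. apply series_lim, cosh_series. }
  assert (Hunif : filterlim (fun K => fun y => PS a K y * cos (t * y)) eventually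
                    (locally (fun y => rhs_integrand a t y))).
  { intros P [eps HP].
    destruct (proj2 (is_lim_seq_spec _ _) Htl eps) as [N HN].
    exists N. intros K HK. apply HP. intros y.
    change (Rabs (PS a K y * cos (t * y) - rhs_integrand a t y) < eps).
    rewrite rhs_eq.
    replace (PS a K y * cos (t * y) - Fs a y * cos (t * y)) with (- ((Fs a y - PS a K y) * cos (t * y))) by ring.
    rewrite Rabs_Ropp, Rabs_mult.
    pose proof (PS_unif a y K). pose proof (abs_cos (t * y)). pose proof (HN K HK) as HNK.
    rewrite Rminus_0_r in HNK. unfold tl in HNK.
    assert (0 <= Rabs (Fs a y - PS a K y)) by apply Rabs_pos.
    apply Rle_lt_trans with (Rabs (Fs a y - PS a K y)).
    { rewrite <- (Rmult_1_r (Rabs (Fs a y - PS a K y))) at 2. apply Rmult_le_compat_l; auto. }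
    eapply Rle_lt_trans. exact H. eapply Rle_lt_trans. apply Rle_abs. exact HNK. }
  destruct (filterlim_RInt (fun K y => PS a K y * cos (t * y)) 0 Y eventually eventually_filter
              (fun y => rhs_integrand a t y) (fun K => sum_f_R0 (fun k => cc a k * Ak t k Y) K)
              (fun K => PS_int a t Y K) Hunif) as [If [HIf HRI]].
  exists If. split; [exact HRI|].
  assert (HIf' : is_lim_seq (fun K => sum_f_R0 (fun k => cc a k * Ak t k Y) K) If) by exact HIf.
  assert (Hb : is_lim_seq (fun K => Ak t 0 Y * sum_f_R0 (fun k => cc a k * (- t ^ 2) ^ k) K)
                 (Ak t 0 Y * ber (a * sqrt t))).
  { apply (is_lim_seq_scal_l _ (Ak t 0 Y) (ber (a * sqrt t))). apply series_lim, ber_series. lra. }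
  pose proof (is_lim_seq_abs _ _ (is_lim_seq_minus' _ _ _ _ HIf' Hb)) as D.
  assert (Hle : forall K, Rabs (sum_f_R0 (fun k => cc a k * Ak t k Y) K -
                                Ak t 0 Y * sum_f_R0 (fun k => cc a k * (- t ^ 2) ^ k) K)
                          <= cosh (zz a * (2 * (1 + t))) / sqrt (1 + Y ^ 2)).
  { intros K. rewrite scal_sum, <- minus_sum.
    eapply Rle_trans. apply Rsum_abs.
    pose proof (sqrt_lt_R0 (1 + Y ^ 2) ltac:(pose proof (pow2_ge_0 Y); lra)) as Hs.
    apply Rle_trans with (sum_f_R0 (fun k => (zz a * (2 * (1 + t))) ^ (2 * k) / INR (fact (2 * k))) K / sqrt (1 + Y ^ 2)).
    2:{ unfold Rdiv. apply Rmult_le_compat_r. left; apply Rinv_0_lt_compat; lra.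
        apply cosh_partial. apply Rmult_le_pos. apply zz_nonneg. lra. }
    unfold Rdiv. rewrite (Rmult_comm (sum_f_R0 _ K)), scal_sum. apply sum_Rle. intros k _.
    replace (cc a k * Ak t k Y - cc a k * (- t ^ 2) ^ k * Ak t 0 Y)
      with (cc a k * (Ak t k Y - (- t ^ 2) ^ k * Ak t 0 Y)) by ring.
    rewrite Rabs_mult. pose proof (E_bound t k Y ht) as HE.
    pose proof (fact_pos_R (2 * k)). pose proof (zz_nonneg a).
    assert (0 <= cc a k) by (unfold cc; apply Rdiv_le_0_compat; [apply pow_le; lra | apply pow_lt; lra]).
    rewrite (Rabs_right (cc a k)) by lra.
    eapply Rle_trans. apply Rmult_le_compat_l. lra. exact HE.
    unfold cc. rewrite (Rpow_mult_distr (zz a)). right. field. lra. }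
  assert (R : Rbar_le (Rbar_abs (If - Ak t 0 Y * ber (a * sqrt t))) (cosh (zz a * (2 * (1 + t))) / sqrt (1 + Y ^ 2))).
  { eapply is_lim_seq_le. 2: exact D. 2: apply is_lim_seq_const. exact Hle. }
  simpl in R. rewrite Rmult_comm in R. exact R.
Qed.



Lemma cosh_pos x : 0 < cosh x.
Proof. unfold cosh. pose proof (exp_pos x). pose proof (exp_pos (- x)). lra. Qed.

Lemma cosh_ge_half_exp x : exp x / 2 <= cosh x.
Proof. unfold cosh. pose proof (exp_pos (- x)). lra. Qed.

Lemma cpt f x : ex_derive f x -> continuity_pt f x.
Proof. intros H. apply continuity_pt_filterlim. apply (ex_derive_continuous f x H). Qed.

Ltac c2d :=
  repeat first
    [ apply continuity_2d_pt_mult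
    | apply continuity_2d_pt_plus
    | apply continuity_2d_pt_opp
    | apply continuity_2d_pt_id1
    | apply continuity_2d_pt_id2
    | apply continuity_2d_pt_const
    | apply (continuity_1d_2d_pt_comp exp); [apply cpt; auto_derive; auto|]
    | apply (continuity_1d_2d_pt_comp cos); [apply cpt; auto_derive; auto|]
    | apply (continuity_1d_2d_pt_comp sin); [apply cpt; auto_derive; auto|]
    | apply (continuity_1d_2d_pt_comp cosh); [apply cpt; auto_derive; auto|]
    | apply (continuity_1d_2d_pt_comp sinh); [apply cpt; auto_derive; auto|] ].

Lemma abs_sin_le x : Rabs (sin x) <= 1.
Proof. apply Rabs_le. pose proof (SIN_bound x). lra. Qed.

Lemma sin_third x : 0 <= x <= PI / 2 -> x / 3 <= sin x.
Proof.
  intros Hx. pose proof PI2_1. pose proof PI_4.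
  assert (Hlb : forall a, 0 <= a <= 1 -> 5 * a / 6 <= sin a).
  { intros a Ha. destruct (SIN a) as [H1 _]; try lra.
    unfold sin_lb, sin_approx, sin_term in H1. simpl in H1.
    assert (0 <= a ^ 2 <= 1) by (split; nra).
    assert (a ^ 7 <= a ^ 5) by (replace (a^7) with (a^5 * a^2) by ring; assert (0 <= a^5) by (apply pow_le; lra); nra).
    assert (a ^ 3 <= a) by (replace (a^3) with (a * a^2) by ring; nra).
    assert (0 <= a ^ 5) by (apply pow_le; lra).
    simpl in *. nra. }
  destruct (Rle_dec x 1).
  - pose proof (Hlb x ltac:(lra)). lra.
  - pose proof (Hlb 1 ltac:(lra)).
    assert (sin 1 <= sin x) by (apply sin_incr_1; lra). lra.
Qed.

Section Contour.
Variable t U : R.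
Hypothesis ht : 0 < t.
Hypothesis hU : 0 <= U.

Definition Pc (th u : R) := exp (- t * cosh u * sin th) * cos (t * sinh u * cos th).
Definition Qc (th u : R) := exp (- t * cosh u * sin th) * sin (t * sinh u * cos th).
Definition dPc (th u : R) := exp (- t * cosh u * sin th) *
   (- t * cosh u * cos th * cos (t * sinh u * cos th) + t * sinh u * sin th * sin (t * sinh u * cos th)).

Lemma dPc_th th u : is_derive (fun z => Pc z u) th (dPc th u).
Proof. unfold Pc, dPc. auto_derive; auto. ring. Qed.

Lemma dQc_u th u : is_derive (fun z => - Qc th z) u (dPc th u).
Proof. unfold Qc, dPc. auto_derive; auto. ring. Qed.

Lemma dPc_cont th u : continuity_2d_pt dPc th u.
Proof. unfold dPc. c2d. Qed.

Lemma dPc_cont_u th u : continuous (dPc th) u.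
Proof. apply (ex_derive_continuous (dPc th)). unfold dPc. auto_derive. auto. Qed.

Lemma Pc_ex th : ex_RInt (fun u => Pc th u) 0 U.
Proof.
  apply (@ex_RInt_continuous R_CompleteNormedModule). intros z _.
  apply (ex_derive_continuous (fun u => Pc th u)). unfold Pc. auto_derive. auto.
Qed.

Lemma Phi_derive th : is_derive (fun z => RInt (fun u => Pc z u) 0 U) th (- Qc th U).
Proof.
  pose proof (is_derive_RInt_param (fun z u => Pc z u) 0 U th) as H.
  assert (E : RInt (fun u => Derive (fun z => Pc z u) th) 0 U = - Qc th U).
  { rewrite (RInt_ext _ (dPc th)).
    2: { intros x _. apply is_derive_unique, dPc_th. }
    apply is_RInt_unique.
    replace (- Qc th U) with (minus (- Qc th U) (- Qc th 0)).
    2: { unfold Qc. rewrite sinh_0. rewrite Rmult_0_r, Rmult_0_l, sin_0. toR. unfold minus, plus, opp; simpl. ring. }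
    apply (@is_RInt_derive R_CompleteNormedModule (fun z => - Qc th z)).
    - intros; apply dQc_u.
    - intros; apply dPc_cont_u. }
  rewrite <- E. apply H.
  - apply filter_forall. intros z v _. eexists. apply dPc_th.
  - intros v _. apply continuity_2d_pt_ext with dPc.
    + intros x y. symmetry. apply is_derive_unique, dPc_th.
    + apply dPc_cont.
  - apply filter_forall. intros z. apply Pc_ex.
Qed.

Lemma Qc_cont_th th : continuous (fun z => - Qc z U) th.
Proof. apply (ex_derive_continuous (fun z => - Qc z U)). unfold Qc. auto_derive. auto. Qed.

Lemma exp_le x y : x <= y -> exp x <= exp y.
Proof. intros [H|H]. left; apply exp_increasing; auto. subst; lra. Qed.

Lemma contour_bound :
  Rabs (RInt (fun u => cos (t * sinh u)) 0 U - RInt (fun u => exp (- t * cosh u)) 0 U) <= 3 / (t * cosh U).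
Proof.
  pose proof PI2_1 as Hpi.
  assert (F : is_RInt (fun z => - Qc z U) 0 (PI / 2)
     (minus (RInt (fun u => Pc (PI / 2) u) 0 U) (RInt (fun u => Pc 0 u) 0 U))).
  { apply (@is_RInt_derive R_CompleteNormedModule (fun z => RInt (fun u => Pc z u) 0 U)).
    - intros; apply Phi_derive.
    - intros; apply Qc_cont_th. }
  rewrite (RInt_ext (fun u => Pc (PI / 2) u) (fun u => exp (- t * cosh u))) in F.
  2: { intros x _. unfold Pc. rewrite sin_PI2, cos_PI2, !Rmult_0_r, cos_0, Rmult_1_r, Rmult_1_r. reflexivity. }
  rewrite (RInt_ext (fun u => Pc 0 u) (fun u => cos (t * sinh u))) in F.
  2: { intros x _. unfold Pc. rewrite sin_0, cos_0, !Rmult_0_r, exp_0, !Rmult_1_r, Rmult_1_l. reflexivity. }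
  apply (@is_RInt_unique R_CompleteNormedModule) in F.
  replace (RInt (fun u => cos (t * sinh u)) 0 U - RInt (fun u => exp (- t * cosh u)) 0 U)
    with (- RInt (fun z => - Qc z U) 0 (PI / 2)).
  2: { rewrite F. toR. unfold minus, plus, opp; simpl. ring. }
  rewrite Rabs_Ropp.
  pose proof (cosh_pos U) as HcU.
  set (c := t * cosh U / 3).
  assert (Hc : 0 < c) by (unfold c; apply Rdiv_lt_0_compat; [apply Rmult_lt_0_compat|]; lra).
  assert (Hex1 : ex_RInt (fun z => - Qc z U) 0 (PI / 2)).
  { apply (@ex_RInt_continuous R_CompleteNormedModule). intros; apply Qc_cont_th. }
  assert (Hex2 : ex_RInt (fun z => Rabs (- Qc z U)) 0 (PI / 2)).
  { apply (@ex_RInt_continuous R_CompleteNormedModule). intros z _.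
    apply (continuous_comp (fun z => - Qc z U) Rabs). apply Qc_cont_th. apply continuous_Rabs. }
  assert (HE : is_RInt (fun z => exp (- c * z)) 0 (PI / 2)
                 (minus (- exp (- c * (PI / 2)) / c) (- exp (- c * 0) / c))).
  { apply (@is_RInt_derive R_CompleteNormedModule (fun z => - exp (- c * z) / c)).
    - intros x _. auto_derive; auto. field. lra.
    - intros x _. apply (ex_derive_continuous (fun z => exp (- c * z))). auto_derive. auto. }
  eapply Rle_trans. apply abs_RInt_le. lra. exact Hex1.
  eapply Rle_trans. apply (RInt_le _ (fun z => exp (- c * z))). lra. exact Hex2.
  { eexists. exact HE. }
  { intros x Hx. rewrite Rabs_Ropp. unfold Qc. rewrite Rabs_mult, Rabs_right by (apply Rle_ge, Rlt_le, exp_pos).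
    pose proof (abs_sin_le (t * sinh U * cos x)).
    apply Rle_trans with (exp (- t * cosh U * sin x)).
    { rewrite <- (Rmult_1_r (exp (- t * cosh U * sin x))) at 2. apply Rmult_le_compat_l; auto.
      left; apply exp_pos. }
    apply exp_le. pose proof (sin_third x ltac:(lra)). unfold c.
    assert (0 < t * cosh U) by (apply Rmult_lt_0_compat; lra).
    replace (- t * cosh U * sin x) with (- (t * cosh U) * sin x) by ring.
    replace (- (t * cosh U / 3) * x) with (- (t * cosh U) * (x / 3)) by field. nra. }
  rewrite (@is_RInt_unique R_CompleteNormedModule _ _ _ _ HE). unfold minus, plus, opp; simpl.
  rewrite Rmult_0_r, exp_0.
  replace (3 / (t * cosh U)) with (1 / c) by (unfold c; field; split; lra).
  pose proof (exp_pos (- c * (PI / 2))).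
  apply Rle_trans with (1 / c - exp (- c * (PI / 2)) / c). { right. field. lra. }
  assert (0 < exp (- c * (PI / 2)) / c) by (apply Rdiv_lt_0_compat; lra). lra.
Qed.

End Contour.


Lemma gen_of_lim (f : R -> R) L :
  (forall eps : posreal, exists M, forall b, M < b -> exists I, is_RInt f 0 b I /\ Rabs (I - L) < eps) ->
  is_RInt_gen f (at_point 0) (Rbar_locally p_infty) L.
Proof.
  intros H. unfold is_RInt_gen, filterlimi, filter_le, filtermapi.
  intros P [eps HP]. destruct (H eps) as [M HM].
  apply Filter_prod with (fun a => a = 0) (fun b => M < b).
  - reflexivity.
  - exists M. auto.
  - intros a b -> Hb. destruct (HM b Hb) as [I [HI HIL]]. exists I. split; [exact HI|].
    apply HP. exact HIL.
Qed.

Section K0part.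
Variable t : R.
Hypothesis ht : 0 < t.

Definition Kf (U : R) : R := RInt (fun u => exp (- t * cosh u)) 0 U.

Lemma Kf_ex a b : ex_RInt (fun u => exp (- t * cosh u)) a b.
Proof.
  apply (@ex_RInt_continuous R_CompleteNormedModule). intros z _.
  apply (ex_derive_continuous (fun u => exp (- t * cosh u))). auto_derive. auto.
Qed.

Lemma Kf_mono U V : U <= V -> Kf U <= Kf V.
Proof.
  intros H. unfold Kf. rewrite <- (RInt_Chasles _ 0 U V) by apply Kf_ex.
  assert (0 <= RInt (fun u => exp (- t * cosh u)) U V).
  { apply RInt_ge_0; auto. apply Kf_ex. intros; left; apply exp_pos. }
  change (RInt (fun u => exp (- t * cosh u)) 0 U <= RInt (fun u => exp (- t * cosh u)) 0 U + RInt (fun u => exp (- t * cosh u)) U V).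
  lra.
Qed.

Lemma cosh_ge u : 0 <= u -> u <= cosh u.
Proof.
  intros Hu. pose proof (cosh_ge_half_exp u).
  assert (E : exp u = exp (u / 2) * exp (u / 2)) by (rewrite <- exp_plus; f_equal; field).
  pose proof (exp_ineq1_le (u / 2)).
  assert ((1 + u / 2) * (1 + u / 2) <= exp (u / 2) * exp (u / 2)) by (apply Rmult_le_compat; lra).
  assert (0 <= (1 - u / 2) * (1 - u / 2)) by apply Rle_0_sqr.
  lra.
Qed.

Lemma Kf_bound U : 0 <= U -> Kf U <= / t.
Proof.
  intros HU. unfold Kf.
  assert (HE : is_RInt (fun u => exp (- t * u)) 0 U (minus (- exp (- t * U) / t) (- exp (- t * 0) / t))).
  { apply (@is_RInt_derive R_CompleteNormedModule (fun z => - exp (- t * z) / t)).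
    - intros x _. auto_derive; auto. field. lra.
    - intros x _. apply (ex_derive_continuous (fun z => exp (- t * z))). auto_derive. auto. }
  eapply Rle_trans. apply (RInt_le _ (fun u => exp (- t * u))); auto. apply Kf_ex.
  { eexists; exact HE. }
  { intros x Hx. apply exp_le. pose proof (cosh_ge x ltac:(lra)). nra. }
  rewrite (@is_RInt_unique R_CompleteNormedModule _ _ _ _ HE). unfold minus, plus, opp; simpl.
  rewrite Rmult_0_r, exp_0. pose proof (exp_pos (- t * U)).
  apply Rle_trans with (/ t - exp (- t * U) / t). { right. field. lra. }
  assert (0 < exp (- t * U) / t) by (apply Rdiv_lt_0_compat; lra). lra.
Qed.

Lemma Kf_lim : exists L, forall eps, 0 < eps -> exists M, 0 <= M /\ forall U, M <= U -> Rabs (Kf U - L) < eps.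
Proof.
  set (E := fun x => exists U, 0 <= U /\ x = Kf U).
  assert (HB : bound E). { exists (/ t). intros x [U [HU ->]]. apply Kf_bound; auto. }
  assert (HE : exists x, E x). { exists (Kf 0). exists 0. split; [lra|reflexivity]. }
  destruct (completeness E HB HE) as [L [Hub Hlub]].
  exists L. intros eps Heps.
  destruct (Classical_Prop.classic (exists U, 0 <= U /\ L - eps < Kf U)) as [[U0 [HU0 HK]]|Hn].
  - exists U0. split; auto. intros U HU.
    assert (Kf U0 <= Kf U) by (apply Kf_mono; auto).
    assert (Kf U <= L) by (apply Hub; exists U; split; [lra|reflexivity]).
    apply Rabs_lt_between'. lra.
  - exfalso. assert (L <= L - eps).
    { apply Hlub. intros x [U [HU ->]]. destruct (Rle_dec (Kf U) (L - eps)) as [h|h]; auto.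
      exfalso. apply Hn. exists U. split; auto. lra. }
    lra.
Qed.

End K0part.

Lemma K0_eq t L : 0 < t ->
  (forall eps, 0 < eps -> exists M, 0 <= M /\ forall U, M <= U -> Rabs (Kf t U - L) < eps) -> K0 t = L.
Proof.
  intros ht H. unfold K0. apply is_RInt_gen_unique.
  apply gen_of_lim. intros eps. destruct (H eps (cond_pos eps)) as [M [HM0 HM]].
  exists M. intros b Hb. exists (Kf t b). split.
  - apply (@RInt_correct R_CompleteNormedModule). apply Kf_ex.
  - apply HM. lra.
Qed.

Lemma cosh_sinh_sq x : cosh x ^ 2 = 1 + sinh x ^ 2.
Proof.
  unfold cosh, sinh. assert (exp x * exp (- x) = 1) by (rewrite <- exp_plus, Rplus_opp_r, exp_0; reflexivity).
  field_simplify. nra.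
Qed.

Lemma change_var t U :
  RInt (fun y => Gf 0 y * cos (t * y)) 0 (sinh U) = RInt (fun u => cos (t * sinh u)) 0 U.
Proof.
  pose proof (@is_RInt_comp R_CompleteNormedModule (fun y => Gf 0 y * cos (t * y)) sinh cosh 0 U) as H.
  rewrite sinh_0 in H. symmetry. apply (@is_RInt_unique R_CompleteNormedModule).
  eapply is_RInt_ext. 2: apply H.
  - intros x _. unfold Gf. rewrite Tn_0. simpl fact. simpl INR. simpl pow.
    change (cosh x * (1 * (1 * 1) * 1 / (sqrt (1 + sinh x * (sinh x * 1)) * 1) * cos (t * sinh x)) = cos (t * sinh x)).
    pose proof (cosh_sinh_sq x) as E. simpl in E. rewrite <- E.
    pose proof (cosh_pos x). replace (cosh x * (cosh x * 1)) with (cosh x * cosh x) by ring. rewrite sqrt_square by lra. field. lra.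
  - intros x _. apply (continuous_mult (fun y => Gf 0 y) (fun y => cos (t * y))).
    apply G_cont. apply cos_cont.
  - intros x _. split.
    + apply is_derive_Reals. apply derivable_pt_lim_sinh.
    + apply (ex_derive_continuous cosh). auto_derive. auto.
Qed.

Lemma A0_lim t : 0 < t -> forall eps, 0 < eps -> exists M, 0 <= M /\ forall Y, M <= Y -> Rabs (Ak t 0 Y - K0 t) < eps.
Proof.
  intros ht. destruct (Kf_lim t ht) as [L HL]. rewrite (K0_eq t L ht HL).
  intros eps Heps. destruct (HL (eps / 2)) as [M1 [HM10 HM1]]; [lra|].
  exists (Rmax (sinh M1) (Rmax (6 / (t * eps)) 1)). split.
  { eapply Rle_trans. 2: apply Rmax_r. eapply Rle_trans. 2: apply Rmax_r. lra. }
  intros Y HY.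
  assert (HY1 : sinh M1 <= Y) by (eapply Rle_trans; [apply Rmax_l| exact HY]).
  assert (HY2 : 6 / (t * eps) <= Y) by (eapply Rle_trans; [eapply Rle_trans; [apply Rmax_l| apply Rmax_r] | exact HY]).
  assert (HY3 : 1 <= Y) by (eapply Rle_trans; [eapply Rle_trans; [apply Rmax_r| apply Rmax_r] | exact HY]).
  set (U := arcsinh Y).
  assert (HU1 : M1 <= U) by (unfold U; rewrite <- (arcsinh_sinh M1); apply arcsinh_le; auto).
  assert (HU0 : 0 <= U) by lra.
  assert (HsU : sinh U = Y) by apply sinh_arcsinh.
  unfold Ak. replace (2 * 0)%nat with 0%nat by reflexivity.
  rewrite <- HsU, change_var.
  pose proof (contour_bound t U ht) as HC. fold (Kf t U) in HC.
  pose proof (HM1 U HU1) as HK.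
  assert (Hc : Y < cosh U).
  { rewrite <- HsU. unfold cosh, sinh. pose proof (exp_pos (- U)). lra. }
  assert (Hb : 3 / (t * cosh U) < eps / 2).
  { assert (0 < t * Y) by (apply Rmult_lt_0_compat; lra).
    assert (t * Y < t * cosh U) by (apply Rmult_lt_compat_l; lra).
    apply Rlt_le_trans with (3 / (t * Y)).
    { unfold Rdiv. apply Rmult_lt_compat_l; [lra|]. apply Rinv_lt_contravar; [nra| lra]. }
    assert (6 <= Y * (t * eps)).
    { apply (Rmult_le_compat_r (t * eps)) in HY2. 2: { apply Rlt_le, Rmult_lt_0_compat; lra. }
      replace (6 / (t * eps) * (t * eps)) with 6 in HY2 by (field; split; lra). lra. }
    apply (Rmult_le_reg_r (t * Y)); [lra|].
    replace (3 / (t * Y) * (t * Y)) with 3 by (field; split; lra). nra. }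
  replace (RInt (fun u => cos (t * sinh u)) 0 U - L)
    with ((RInt (fun u => cos (t * sinh u)) 0 U - Kf t U) + (Kf t U - L)) by ring.
  eapply Rle_lt_trans. apply Rabs_triang. lra.
Qed.

Theorem mainTheorem7 (a t : R) (ht : 0 < t) :
  is_RInt_gen (fun y => rhs_integrand a t y) (at_point 0) (Rbar_locally p_infty)
    (K0 t * ber (a * sqrt t)).
Proof.
  apply gen_of_lim. intros eps.
  set (B := cosh (zz a * (2 * (1 + t)))).
  set (br := ber (a * sqrt t)).
  assert (HB : 0 < B) by apply cosh_pos.
  pose proof (cond_pos eps) as He.
  destruct (A0_lim t ht (eps / (2 * (Rabs br + 1)))) as [M [HM0 HM]].
  { apply Rdiv_lt_0_compat. lra. pose proof (Rabs_pos br). lra. }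
  exists (Rmax M (Rmax (2 * B / eps) 1)). intros b Hb.
  assert (Hb1 : M <= b) by (eapply Rle_trans; [apply Rmax_l| left; exact Hb]).
  assert (Hb2 : 2 * B / eps < b) by (eapply Rle_lt_trans; [eapply Rle_trans; [apply Rmax_l| apply Rmax_r] | exact Hb]).
  assert (Hb3 : 1 <= b) by (eapply Rle_trans; [eapply Rle_trans; [apply Rmax_r| apply Rmax_r] | left; exact Hb]).
  destruct (finite_Y a t b ht) as [I [HI HIb]].
  exists I. split; [exact HI|]. fold B br in HIb.
  pose proof (HM b Hb1) as HA.
  assert (Hs : b <= sqrt (1 + b ^ 2)).
  { rewrite <- (sqrt_pow2 b) at 1 by lra. apply sqrt_le_1_alt. lra. }
  assert (H1 : B / sqrt (1 + b ^ 2) < eps / 2).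
  { apply Rle_lt_trans with (B / b).
    { unfold Rdiv. apply Rmult_le_compat_l; [lra|]. apply Rinv_le_contravar; lra. }
    apply (Rmult_lt_reg_r b); [lra|]. replace (B / b * b) with B by (field; lra).
    apply (Rmult_lt_compat_r eps) in Hb2; [|lra].
    replace (2 * B / eps * eps) with (2 * B) in Hb2 by (field; lra). nra. }
  assert (H2 : Rabs (br * (Ak t 0 b - K0 t)) < eps / 2).
  { rewrite Rabs_mult. pose proof (Rabs_pos br).
    apply Rle_lt_trans with (Rabs br * (eps / (2 * (Rabs br + 1)))).
    { apply Rmult_le_compat_l; lra. }
    apply Rlt_le_trans with ((Rabs br + 1) * (eps / (2 * (Rabs br + 1)))).
    { apply Rmult_lt_compat_r. apply Rdiv_lt_0_compat; lra. lra. }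
    right. field. lra. }
  replace (I - K0 t * br) with ((I - br * Ak t 0 b) + br * (Ak t 0 b - K0 t)) by ring.
  eapply Rle_lt_trans. apply Rabs_triang. lra.
Qed.
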